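(* For every integer $n\geqslant 2$, $\mathbf{I}\mathbb{N}_{\infty}^n$ is an $F$-inverse semigroup.
   Context: $\mathbb{N}=\{1,2,3,\ldots\}$ and $\mathbb{N}^n$ carries the Euclidean metric $d$. A partial isometry of $\mathbb{N}^n$ is an injective partial map $\alpha\colon\mathbb{N}^n\rightharpoonup\mathbb{N}^n$ with $d((\mathbf{x})\alpha,(\mathbf{y})\alpha)=d(\mathbf{x},\mathbf{y})$ for all $\mathbf{x},\mathbf{y}\in\operatorname{dom}\alpha$; it is cofinite if $\mathbb{N}^n\setminus\operatorname{dom}\alpha$ and $\mathbb{N}^n\setminus\operatorname{ran}\alpha$ are finite. $\mathbf{I}\mathbb{N}_{\infty}^n$ is the monoid of all partial cofinite isometries of $\mathbb{N}^n$ under composition of partial maps. An inverse semigroup $S$ is $F$-inverse if every element of $S$ lies below a unique maximal element with respect to the natural partial order ($s\preccurlyeq t$ iff $s=te$ for some idempotent $e$), equivalently every class of the least group congruence has a maximum element. *)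

(* Defs.v *)
From mathcomp Require Import all_boot.
Set Implicit Arguments. Unset Strict Implicit. Unset Printing Implicit Defensive.

Definition closed_under (T : Type) (S : T -> Prop) (mul : T -> T -> T) :=
  forall a b, S a -> S b -> S (mul a b).

Definition assoc_on (T : Type) (S : T -> Prop) (mul : T -> T -> T) :=
  forall a b c, S a -> S b -> S c -> mul a (mul b c) = mul (mul a b) c.

Definition unique_inverses (T : Type) (S : T -> Prop) (mul : T -> T -> T) :=
  forall a, S a -> exists! b, S b /\ mul (mul a b) a = a /\ mul (mul b a) b = b.

Definition inverse_semigroup (T : Type) (S : T -> Prop) (mul : T -> T -> T) :=
  [/\ closed_under S mul, assoc_on S mul & unique_inverses S mul].

Definition idempotent (T : Type) (S : T -> Prop) (mul : T -> T -> T) (e : T) :=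
  S e /\ mul e e = e.

Definition npo (T : Type) (S : T -> Prop) (mul : T -> T -> T) (s t : T) :=
  exists e, idempotent S mul e /\ s = mul t e.

Definition npo_maximal (T : Type) (S : T -> Prop) (mul : T -> T -> T) (t : T) :=
  S t /\ forall u, S u -> npo S mul t u -> u = t.

Definition F_inverse (T : Type) (S : T -> Prop) (mul : T -> T -> T) :=
  inverse_semigroup S mul /\
  forall s, S s -> exists! t, npo_maximal S mul t /\ npo S mul s t.

(* Ambient point type: n-tuples of nat; N^n = tuples with all entries >= 1. *)
Definition pt (n : nat) := n.-tuple nat.

Definition inNn (n : nat) (x : pt n) : bool := all (fun k => 0 < k) x.

Definition pmapN (n : nat) := pt n -> option (pt n).

(* composition of partial maps, left-to-right: (x)(a b) = ((x)a)b *)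
Definition pmcomp (n : nat) (a b : pmapN n) : pmapN n :=
  fun x => obind b (a x).

Definition absdiff (a b : nat) : nat := maxn a b - minn a b.

(* squared Euclidean distance; d x y = d u v  iff  sqdist x y = sqdist u v *)
Definition sqdist (n : nat) (x y : pt n) : nat :=
  \sum_(i < n) (absdiff (tnth x i) (tnth y i)) ^ 2.

Definition partial_map_of_Nn (n : nat) (a : pmapN n) :=
  forall x y, a x = Some y -> inNn x /\ inNn y.

Definition pinjective (n : nat) (a : pmapN n) :=
  forall x y z, a x = Some z -> a y = Some z -> x = y.

Definition partial_isometry (n : nat) (a : pmapN n) :=
  [/\ partial_map_of_Nn a, pinjective a &
      forall x y u v, a x = Some u -> a y = Some v -> sqdist u v = sqdist x y].

Definition cofinite_pmap (n : nat) (a : pmapN n) :=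
  (exists s : seq (pt n), forall x, inNn x -> a x = None -> x \in s) /\
  (exists s : seq (pt n), forall y, inNn y -> (forall x, a x <> Some y) -> y \in s).

Definition IN_infty (n : nat) (a : pmapN n) : Prop :=
  partial_isometry a /\ cofinite_pmap a.

(* Main.v *)
Require Import Defs.
From mathcomp Require Import all_boot all_algebra all_fingroup.
From mathcomp Require Import ring zify.
From Stdlib Require Import ClassicalEpsilon FunctionalExtensionality.
Set Implicit Arguments. Unset Strict Implicit. Unset Printing Implicit Defensive.
Import GRing.Theory Num.Theory.

Section Alg.
Variable n : nat.
Local Open Scope ring_scope.

Definition zc (x : pt n) (i : 'I_n) : int := (tnth x i)%:Z.
Definition dot (u v : 'I_n -> int) : int := \sum_i u i * v i.
Definition dif (x y : pt n) : 'I_n -> int := fun i => zc x i - zc y i.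

Lemma absdiff_sq (a b : nat) : ((absdiff a b ^ 2)%N)%:Z = (a%:Z - b%:Z) ^+ 2.
Proof.
rewrite /absdiff; case: (leqP a b) => h.
  rewrite -natz natrX natz -(subzn h). by rewrite -sqrrN opprB.
by rewrite -natz natrX natz (subzn (ltnW h)).
Qed.

Lemma sqdistZ (x y : pt n) : (sqdist x y)%:Z = dot (dif x y) (dif x y).
Proof.
rewrite /sqdist /dot -natz natr_sum; apply: eq_bigr => i _.
by rewrite natz absdiff_sq expr2.
Qed.

Lemma polar (x y u v : pt n) :
  2 * dot (dif x y) (dif u v) =
  dot (dif x v) (dif x v) + dot (dif y u) (dif y u)
  - dot (dif x u) (dif x u) - dot (dif y v) (dif y v).
Proof.
rewrite /dot mulr_sumr -big_split /= -sumrB -sumrB.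
apply: eq_bigr => i _; rewrite /dif; ring.
Qed.

Lemma dot_sparse (u g : 'I_n -> int) j :
  (forall k, k != j -> g k = 0) -> dot u g = u j * g j.
Proof.
move=> h; rewrite /dot (bigD1 j) //= big1 ?addr0 // => k /h ->; by rewrite mulr0.
Qed.

Lemma dot_sym u v : dot u v = dot v u.
Proof. by apply: eq_bigr => i _; rewrite mulrC. Qed.

Lemma unit_vec (u : 'I_n -> int) : dot u u = 1 ->
  exists j, u j ^+ 2 = 1 /\ forall k, k != j -> u k = 0.
Proof.
move=> h.
have [j uj] : exists j, u j != 0.
  case: (pickP (fun j => u j != 0)) => [j hj|h0]; first by exists j.
  move: h; rewrite /dot big1 => [//|i _]; by move: (h0 i) => /= /negbFE /eqP ->; rewrite mulr0.
exists j.
move: h; rewrite /dot (bigD1 j) //= => h.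
have hs : 0 <= \sum_(i | i != j) u i * u i by apply: sumr_ge0 => i _; rewrite -expr2 sqr_ge0.
have hj : 1 <= u j * u j.
  rewrite -expr2; have: 0 < u j ^+ 2 by rewrite exprn_even_gt0 //.
  by [].
move: h hs hj; set A := u j * u j; set B := \sum_(i | i != j) u i * u i => h hs hj.
have e1 : A = 1 by lia.
have e2 : B = 0 by lia.
split; first by rewrite expr2.
move=> k kj.
have H : forall i, i != j -> 0 <= u i * u i by move=> i _; rewrite -expr2 sqr_ge0.
have := @psumr_eq0P _ _ _ _ H e2 k kj.
by move/eqP; rewrite mulf_eq0 orbb => /eqP.
Qed.

Definition bnd (s : seq (pt n)) : nat := \sum_(x <- s) \sum_i tnth x i.

Lemma bnd_ge (x : pt n) s i : x \in s -> (tnth x i <= bnd s)%N.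
Proof.
elim: s => //= y s IH; rewrite inE /bnd big_cons => /orP [/eqP->|/IH h].
  by apply: leq_trans (leq_addr _ _); rewrite (bigD1 i) //= leq_addr.
by apply: leq_trans h (leq_addl _ _).
Qed.

Lemma notin_bnd (x : pt n) s i : (bnd s < tnth x i)%N -> x \notin s.
Proof. by apply: contraTN => /bnd_ge => /(_ i); rewrite leqNgt. Qed.

Definition mkpt (f : 'I_n -> nat) : pt n := [tuple f i | i < n].
Lemma tnth_mkpt f i : tnth (mkpt f) i = f i.
Proof. by rewrite tnth_mktuple. Qed.
Lemma inNn_mkpt f : (forall i, (0 < f i)%N) -> inNn (mkpt f).
Proof. by move=> h; apply/all_tnthP => i; rewrite tnth_mkpt. Qed.
Lemma inNn_tnth (x : pt n) i : inNn x -> (0 < tnth x i)%N.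
Proof. by move/all_tnthP. Qed.

End Alg.
Arguments mkpt {n}. Arguments dif {n}. Arguments dot {n}. Arguments zc {n}. Arguments bnd {n}.
Local Open Scope ring_scope.
Lemma core n (hn : (1 < n)%N) (a : pmapN n) : IN_infty a ->
  exists g : {perm 'I_n}, forall x y, a x = Some y -> forall j, tnth y j = tnth x (g j).
Proof.
case=> [[Hmap Hinj Hiso] [[sd Hsd] [sr Hsr]]].
have other : forall i : 'I_n, exists j, j != i.
  move=> i; have h0 : (0 < n)%N by apply: ltnW.
  case: (eqVneq i (Ordinal h0)) => [->|ne]; last by exists (Ordinal h0); rewrite eq_sym.
  by exists (Ordinal hn); apply/eqP => /(congr1 val).
pose K := (bnd sd).+1.
have inD : forall x i, inNn x -> (K <= tnth x i)%N -> exists y, a x = Some y.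
  move=> x i xN hK; case E: (a x) => [y|]; first by exists y.
  by move: (Hsd x xN E); rewrite (negbTE (notin_bnd hK)).
have i0 : 'I_n := Ordinal (ltnW hn).
pose o : pt n := mkpt (fun _ => K).
have [ao Hao] : exists ao, a o = Some ao.
  by apply: (inD o i0); [apply: inNn_mkpt | rewrite tnth_mkpt].
have pres : forall p q p' q', a p = Some p' -> a q = Some q' ->
    dot (dif p' ao) (dif q' ao) = dot (dif p o) (dif q o).
  move=> p q p' q' hp hq; apply: (@mulfI _ 2) => //; rewrite !polar -!sqdistZ.
  by rewrite (Hiso _ _ _ _ hp Hao) (Hiso _ _ _ _ Hao hq) (Hiso _ _ _ _ hp hq) (Hiso _ _ _ _ Hao Hao).
pose e (i : 'I_n) : pt n := mkpt (fun j => K + (j == i))%N.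
pose av x := odflt o (a x).
have Hf : forall i, a (e i) = Some (av (e i)).
  move=> i; have [y hy] : exists y, a (e i) = Some y.
    by apply: (inD _ i0); [apply: inNn_mkpt | rewrite tnth_mkpt leq_addr].
  by rewrite /av hy.
pose f i := dif (av (e i)) ao.
have dote : forall u i, dot u (dif (e i) o) = u i.
  move=> u i; rewrite (@dot_sparse _ _ _ i).
    by rewrite /dif /zc !tnth_mkpt eqxx; lia.
  by move=> k nk; rewrite /dif /zc !tnth_mkpt (negbTE nk) addn0 subrr.
have fdot : forall i k, dot (f i) (f k) = (i == k)%:Z.
  by move=> i k; rewrite (pres _ _ _ _ (Hf i) (Hf k)) dote /dif /zc !tnth_mkpt eq_sym; lia.
pose pi i := odflt i [pick j | f i j != 0].
have Hpi : forall i, f i (pi i) ^+ 2 = 1 /\ forall k, k != pi i -> f i k = 0.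
  move=> i; have := fdot i i; rewrite eqxx => /unit_vec [j [h1 h2]].
  have nz : f i j != 0 by apply/eqP => h0; move: h1; rewrite h0 expr0n.
  rewrite /pi; case: pickP => [j' /= hj'|h0]; last by move: (h0 j) => /=; rewrite nz.
  have ej : j' = j by apply: contraTeq hj' => nj; rewrite h2 // eqxx.
  by rewrite ej.
pose eps i := f i (pi i).
have eps2 : forall i, eps i * eps i = 1 by move=> i; rewrite -expr2; case: (Hpi i).
have epsnz : forall i, eps i != 0.
  by move=> i; apply/eqP => h0; move: (eps2 i); rewrite h0 mulr0.
have dotf : forall u i, dot u (f i) = u (pi i) * eps i.
  by move=> u i; apply: dot_sparse; case: (Hpi i).
have piinj : injective pi.
  move=> i k hik; apply/eqP; apply: contraT => nik.
  have := fdot i k; rewrite (negbTE nik) dotf -hik => /eqP; rewrite mulf_eq0 => /orP [] /eqP h0.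
    by move: (epsnz i); rewrite /eps h0 eqxx.
  by move: (epsnz k); rewrite h0 eqxx.
pose P := perm piinj.
have gen : forall p p', a p = Some p' -> forall i,
    zc p' (pi i) = zc ao (pi i) + eps i * (zc p i - (K%:Z)).
  move=> p p' hp i.
  have h : (zc p' (pi i) - zc ao (pi i)) * eps i = zc p i - K%:Z.
    have := pres _ _ _ _ hp (Hf i); rewrite dotf dote /dif /zc tnth_mkpt //.
  rewrite -h mulrCA eps2 mulr1; lia.
have posz : forall y x j, a x = Some y -> 0 < zc y j.
  move=> y x j hx; rewrite /zc ltz_nat; apply: inNn_tnth; exact: (Hmap _ _ hx).2.
have epsP : forall i, eps i = 1.
  move=> i; have: eps i ^+ 2 == 1 by rewrite expr2 eps2.
  rewrite sqrf_eq1 => /orP [/eqP //|/eqP em]; exfalso.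
  pose m := tnth ao (pi i).
  pose p : pt n := mkpt (fun j => K + (j == i) * m)%N.
  have [p' hp] : exists p', a p = Some p'.
    by apply: (inD _ i0); [apply: inNn_mkpt | rewrite tnth_mkpt leq_addr].
  have := gen _ _ hp i; have := posz _ _ (pi i) hp.
  rewrite em /zc tnth_mkpt eqxx mul1n /m; lia.
have off : forall i, tnth ao (pi i) = K.
  move=> i; case: (ltngtP (tnth ao (pi i)) K) => h //; exfalso.
    have [j ji] := other i.
    pose p : pt n := mkpt (fun k => if k == i then 1 else K)%N.
    have [p' hp] : exists p', a p = Some p'.
      apply: (inD _ j); first by apply: inNn_mkpt => k; case: (k == i).
      by rewrite tnth_mkpt (negbTE ji).
    have := gen _ _ hp i; have := posz _ _ (pi i) hp.
    rewrite epsP /zc tnth_mkpt eqxx; lia.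
  have [j ji] := other (pi i).
  pose y : pt n := mkpt (fun k => if k == pi i then 1 else (bnd sr).+1)%N.
  have yN : inNn y by apply: inNn_mkpt => k; case: (k == pi i).
  have [x hx] : exists x, a x = Some y.
    case: (excluded_middle_informative (exists x, a x = Some y)) => // hne.
    have := Hsr y yN (fun x hx => hne (ex_intro _ x hx)).
    by rewrite (negbTE (@notin_bnd _ _ _ j _)) // tnth_mkpt (negbTE ji).
  have := gen _ _ hx i; have := inNn_tnth i (Hmap _ _ hx).1.
  rewrite epsP /zc tnth_mkpt eqxx; lia.
exists P^-1%g => x y hxy j.
have := gen _ _ hxy (P^-1%g j); rewrite epsP.
have -> : pi (P^-1%g j) = j by rewrite -(permE piinj) permKV.
rewrite /zc -(off (P^-1%g j)).
have -> : pi (P^-1%g j) = j by rewrite -(permE piinj) permKV.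
rewrite mul1r addrC subrK; by case.
Qed.

Section Semi.
Variable n : nat.

Definition tau (g : {perm 'I_n}) (x : pt n) : pt n := mkpt (fun j => tnth x (g j)).
Definition Mg (g : {perm 'I_n}) : pmapN n :=
  fun x => if inNn x then Some (tau g x) else None.
Definition inv (a : pmapN n) : pmapN n := fun y =>
  match excluded_middle_informative (exists x, a x = Some y) with
  | left H => Some (proj1_sig (constructive_indefinite_description _ H))
  | right _ => None end.

Lemma inv_spec (a : pmapN n) : pinjective a -> forall x y, inv a y = Some x <-> a x = Some y.
Proof.
move=> ai x y; rewrite /inv; case: excluded_middle_informative => [H|H].
  case: constructive_indefinite_description => x' hx' /=; split; first by case=> <-.
  by move=> hx; rewrite (ai _ _ _ hx hx').
by split=> // hx; case: H; exists x.
Qed.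

Lemma inv_none (a : pmapN n) y : (forall x, a x <> Some y) -> inv a y = None.
Proof.
move=> h; rewrite /inv; case: excluded_middle_informative => // [[x hx]].
by case: (h x).
Qed.

Lemma pmcomp_assoc (a b c : pmapN n) : pmcomp a (pmcomp b c) = pmcomp (pmcomp a b) c.
Proof. by apply: functional_extensionality => x; rewrite /pmcomp; case: (a x). Qed.

Lemma comp_IN (a b : pmapN n) : IN_infty a -> IN_infty b -> IN_infty (pmcomp a b).
Proof.
case=> [[Ma Ia Sa] [[da Hda] [ra Hra]]] [[Mb Ib Sb] [[db Hdb] [rb Hrb]]].
split; first split.
- move=> x z; rewrite /pmcomp; case ha: (a x) => [y|] //= hb.
  by split; [exact: (Ma _ _ ha).1 | exact: (Mb _ _ hb).2].
- move=> x x' z; rewrite /pmcomp; case ha: (a x) => [y|] //=; case ha': (a x') => [y'|] //= hb hb'.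
  by have e := Ib _ _ _ hb hb'; subst y'; exact: Ia _ _ _ ha ha'.
- move=> x x' z z'; rewrite /pmcomp; case ha: (a x) => [y|] //=; case ha': (a x') => [y'|] //= hb hb'.
  by rewrite (Sb _ _ _ _ hb hb') (Sa _ _ _ _ ha ha').
split.
- exists (da ++ pmap (inv a) db) => x xN; rewrite /pmcomp mem_cat.
  case ha: (a x) => [y|] /= hb; last by rewrite Hda.
  apply/orP; right; rewrite mem_pmap.
  have <- : inv a y = Some x by apply/inv_spec.
  by apply: map_f; apply: Hdb => //; exact: (Ma _ _ ha).2.
- exists (rb ++ pmap b ra) => z zN hz; rewrite mem_cat.
  case: (excluded_middle_informative (exists y, b y = Some z)) => [[y hy]|hne]; last first.
    by rewrite Hrb // => y hy; apply: hne; exists y.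
  apply/orP; right; rewrite mem_pmap -hy; apply: map_f; apply: Hra.
    exact: (Mb _ _ hy).1.
  by move=> x hx; apply: (hz x); rewrite /pmcomp hx.
Qed.

Lemma inv_IN (a : pmapN n) : IN_infty a -> IN_infty (inv a).
Proof.
case=> [[Ma Ia Sa] [[da Hda] [ra Hra]]].
have sp := inv_spec Ia.
split; first split.
- by move=> y x /sp /Ma [].
- by move=> y y' x /sp h /sp h'; move: h'; rewrite h; case.
- by move=> y y' x x' /sp h /sp h'; rewrite (Sa _ _ _ _ h h').
split.
- exists ra => y yN hy; apply: Hra => // x hx.
  by move: hy; have -> : inv a y = Some x by apply/sp.
- exists da => x xN hx; apply: Hda => //; case ha: (a x) => [y|] //.
  by case: (hx y); apply/sp.
Qed.

Lemma idem_id (e : pmapN n) : IN_infty e -> pmcomp e e = e -> forall y z, e y = Some z -> z = y.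
Proof.
case=> [[_ Ie _] _] ee y z hy.
have : pmcomp e e y = e y by rewrite ee.
rewrite /pmcomp hy /= => hz; apply: Ie hz _; by rewrite hy.
Qed.

Lemma tau_inj g : injective (tau g).
Proof.
move=> x y h; apply: eq_from_tnth => j.
have := congr1 (fun t => tnth t (g^-1%g j)) h; by rewrite /= !tnth_mkpt permKV.
Qed.

Lemma tauK g y : tau g (tau g^-1%g y) = y.
Proof. by apply: eq_from_tnth => j; rewrite !tnth_mkpt permK. Qed.

Lemma tauN g (x : pt n) : inNn x -> inNn (tau g x).
Proof. by move=> h; apply: inNn_mkpt => j; apply: inNn_tnth. Qed.

Lemma Mg_IN g : IN_infty (Mg g).
Proof.
split; first split.
- by move=> x y; rewrite /Mg; case: ifP => // h [<-]; split => //; apply: tauN.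
- move=> x y z; rewrite /Mg; do 2 case: ifP => //; move=> _ _ <- /(congr1 (odflt x)) /= h; exact: (@tau_inj g _ _ (esym h)).
- move=> x y u v; rewrite /Mg; do 2 case: ifP => //; move=> _ _ [<-] [<-].
  rewrite /sqdist [RHS](reindex_inj (@perm_inj _ g)) /=.
  by apply: eq_bigr => i _; rewrite !tnth_mkpt.
split.
- by exists [::] => x xN; rewrite /Mg xN.
- exists [::] => y yN h; case: (h (tau g^-1%g y)).
  by rewrite /Mg tauN // tauK.
Qed.

End Semi.

Section Main.
Variable n : nat.
Notation S := (@IN_infty n).
Notation mul := (@pmcomp n).

Lemma le_Mg (a : pmapN n) g : S a -> (forall x y, a x = Some y -> y = tau g x) ->
  npo S mul a (Mg g).
Proof.
move=> Ha Hg; have [[Ma Ia _] _] := Ha.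
have sp := inv_spec Ia.
pose e := pmcomp (inv a) a.
have eid : forall y, e y = None \/ e y = Some y.
  move=> y; rewrite /e /pmcomp; case h: (inv a y) => [x|] /=; last by left.
  by right; apply/sp.
exists e; split; first split.
- by apply: comp_IN => //; apply: inv_IN.
- apply: functional_extensionality => y; rewrite {1}/pmcomp.
  by case: (eid y) => h; rewrite h //= h.
apply: functional_extensionality => x; rewrite /pmcomp /Mg.
case ha: (a x) => [y|].
  have [xN _] := Ma _ _ ha.
  by rewrite xN /= -(Hg _ _ ha) /e /pmcomp (proj2 (sp x y) ha) /= ha.
case: ifP => // xN /=.
rewrite /e /pmcomp; case hi: (inv a (tau g x)) => [x'|] //=.
move/sp: (hi) => hx'; have := Hg _ _ hx' => /tau_inj ex; subst x'.
by rewrite hx' in ha.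
Qed.

Lemma npo_restr (s t : pmapN n) : npo S mul s t -> forall x y, s x = Some y -> t x = Some y.
Proof.
case=> e [[Se ee] ->] x y; rewrite /pmcomp; case h: (t x) => [z|] //= hz.
by rewrite (idem_id Se ee hz).
Qed.

Lemma Mg_max g : npo_maximal S mul (Mg g).
Proof.
split; first exact: Mg_IN.
move=> u Su le; apply: functional_extensionality => x.
have [[Mu _ _] _] := Su.
rewrite /Mg; case: ifP => xN.
  by apply: (npo_restr le); rewrite /Mg xN.
by case hu: (u x) => [y|] //; have [] := Mu _ _ hu; rewrite xN.
Qed.

Lemma perm_agree (s : pmapN n) g g' : S s ->
  (forall x y, s x = Some y -> y = tau g x) ->
  (forall x y, s x = Some y -> y = tau g' x) -> g = g'.
Proof.
case=> [_ [[sd Hsd] _]] Hg Hg'; apply/permP => j.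
pose x : pt n := mkpt (fun k : 'I_n => (bnd sd).+1 + k)%N.
have xN : inNn x by apply: inNn_mkpt.
case hs: (s x) => [y|]; last first.
  by move: (Hsd x xN hs); rewrite (negbTE (@notin_bnd _ _ _ j _)) // tnth_mkpt; lia.
have := congr1 (fun t => tnth t j) (etrans (esym (Hg _ _ hs)) (Hg' _ _ hs)).
rewrite /= !tnth_mkpt => h; apply: ord_inj; lia.
Qed.
End Main.

Local Close Scope ring_scope.
Theorem corollary4p1 (n : nat) (hn : 2 <= n) :
  @F_inverse (pmapN n) (@IN_infty n) (@pmcomp n).
Proof.
split.
  split.
  - by move=> a b; apply: comp_IN.
  - by move=> a b c _ _ _; apply: pmcomp_assoc.
  move=> a Ha; have [[Ma Ia _] _] := Ha; have sp := inv_spec Ia.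
  exists (inv a); split.
    split; first exact: inv_IN.
    split; apply: functional_extensionality => x; rewrite /pmcomp.
      by case h: (a x) => [y|] //=; rewrite (proj2 (sp x y) h) /= h.
    case h: (inv a x) => [y|] //=; have h' := proj1 (sp y x) h.
    by rewrite h' /= h.
  move=> b [Sb [e1 e2]]; have [[_ Ib _] _] := Sb.
  apply: functional_extensionality => y.
  case hb: (b y) => [x|].
    have := congr1 (fun f => f y) e2; rewrite /pmcomp hb /=.
    case hx: (a x) => [z|] //= hz.
    have ezy := Ib _ _ _ hz hb; subst z.
    by rewrite (proj2 (sp x y) hx).
  case hi: (inv a y) => [x|] //.
  have hx := proj1 (sp x y) hi.
  have := congr1 (fun f => f x) e1; rewrite /pmcomp hx /= hb //.
have conv : forall (a : pmapN n) (g : {perm 'I_n}),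
    (forall x y, a x = Some y -> forall j, tnth y j = tnth x (g j)) ->
    forall x y, a x = Some y -> y = tau g x.
  by move=> a g h x y hxy; apply: eq_from_tnth => j; rewrite tnth_mkpt (h _ _ hxy).
move=> s Hs; have [g /conv Hg] := core hn Hs.
exists (Mg g); split; first by split; [apply: Mg_max | exact: le_Mg Hs Hg].
move=> t [[St tmax] st].
have [g' /conv Hg'] := core hn St.
have et : Mg g' = t by apply: tmax; [apply: Mg_IN | exact: le_Mg St Hg'].
have eg : g = g'.
  apply: (perm_agree Hs Hg) => x y hxy.
  by apply: Hg'; apply: (npo_restr st).
by rewrite eg.
Qed.
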